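(* Let $f$ be a Boolean function over $X$ and $T$ a vtree over $X$. Then every TDD respecting $T$ and computing $f$ has, for every node $t$ of $T$, at least $S_t$ $t$-nodes, where $S_t$ is the number of distinct non-trivial $X_t$-subfunctions of $f$.
   Context: For $Y\subseteq X$ and $\tau\in 2^Y$, $f[\tau]$ is the Boolean function over $X\setminus Y$ mapping $\sigma$ to $f(\sigma\times\tau)$. The $Y$-subfunctions of $f$ are the functions $f[\tau]$ for $\tau\in 2^Y$ (distinct functions counted once); a subfunction is non-trivial if it has at least one model. A vtree over $X$ is a rooted tree whose internal nodes have exactly two ordered children and whose leaves are labeled bijectively by $X$; $X_t$ is the set of variables below node $t$. An nTDD $C=(N,E)$ respecting $T$ has nodes $N=\biguplus_t N_t$ ($t$-nodes); leaf $t$-nodes (leaf labeled $x$) carry a label in $\{x,\neg x,1,0\}$ and compute that literal/constant; an internal $t$-node $g$ with children $t_1,t_2$ has inputs $E(g)\subseteq N_{t_1}\times N_{t_2}$ and computes $f_g=\bigvee_{(g_1,g_2)\in E(g)}(f_{g_1}\wedge f_{g_2})$ over $X_t$; the distinguished root-node $\mathrm{out}$ gives $f_C=f_{\mathrm{out}}$. A TDD is an nTDD such that for every leaf $t$ labeled $x$, $N_t$ has at most one node labeled $x$, at most one labeled $\neg x$, at most one labeled $1$, and if one is labeled $1$ all others are labeled $0$; and for every internal $t$, distinct $t$-nodes have disjoint input sets. *)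

(* Defs.v *)
From mathcomp Require Import all_boot.
Set Implicit Arguments.
Unset Strict Implicit.
Unset Printing Implicit Defensive.

Section Defs.
Variable X : finType.

Definition assign := {ffun X -> bool}.

Definition merge (Y : {set X}) (tau sigma : assign) : assign :=
  [ffun x => if x \in Y then tau x else sigma x].

(* f[tau] for tau in 2^Y, represented as a function on full assignments
   which only looks at the variables outside Y (i.e. a function over X \ Y). *)
Definition subfun (f : assign -> bool) (Y : {set X}) (tau : assign)
  : {ffun assign -> bool} := [ffun sigma => f (merge Y tau sigma)].

Definition num_nontriv_subfun (f : assign -> bool) (Y : {set X}) : nat :=
  #|[set subfun f Y tau | tau in [pred tau : assign | [exists sigma, subfun f Y tau sigma]]]|.

Inductive vtree := VLeaf of X | VNode of vtree & vtree.

Fixpoint leaves (t : vtree) : seq X :=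
  match t with VLeaf x => [:: x] | VNode l r => leaves l ++ leaves r end.

Definition vtree_over (T : vtree) : Prop :=
  uniq (leaves T) /\ forall x : X, x \in leaves T.

Definition vars (t : vtree) : {set X} := [set x in leaves t].

(* nodes of a vtree are addressed by paths from the root (false = left child,
   true = right child); subtree T p is the subtree rooted at node p, if any *)
Fixpoint subtree (t : vtree) (p : seq bool) : option vtree :=
  match p with
  | [::] => Some t
  | b :: p' => match t with
               | VLeaf _ => None
               | VNode l r => subtree (if b then r else l) p'
               end
  end.

(* labels of leaf t-nodes: x, ~x, 1, 0 (the variable x is the leaf's label) *)
Inductive lit := LPos | LNeg | LOne | LZero.

(* raw data of a (candidate) nTDD: finite node set, the vtree node each circuit
   node belongs to, leaf labels, input sets, output node *)
Record ntdd := Ntdd {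
  node : finType;
  pos : node -> seq bool;
  lbl : node -> lit;
  inp : node -> {set node * node};
  out : node
}.

(* f_g, where t is the vtree node of g *)
Fixpoint evalAt (C : ntdd) (t : vtree) (g : node C) (sigma : assign) : bool :=
  match t with
  | VLeaf x => match lbl g with
               | LPos => sigma x
               | LNeg => ~~ sigma x
               | LOne => true
               | LZero => false
               end
  | VNode l r => [exists gg in inp g, evalAt l gg.1 sigma && evalAt r gg.2 sigma]
  end.

Definition respects (T : vtree) (C : ntdd) : Prop :=
  [/\ forall g : node C, subtree T (pos g) <> None,
      forall (g : node C) l r, subtree T (pos g) = Some (VNode l r) ->
        forall gg, gg \in inp g ->
          pos gg.1 = rcons (pos g) false /\ pos gg.2 = rcons (pos g) true
    & pos (out C) = [::]].

Definition computes (T : vtree) (C : ntdd) (f : assign -> bool) : Prop :=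
  forall sigma, evalAt T (out C) sigma = f sigma.

Definition is_tdd (T : vtree) (C : ntdd) : Prop :=
  (forall p x, subtree T p = Some (VLeaf x) ->
     (forall g h : node C, pos g = p -> pos h = p ->
        lbl g = lbl h -> lbl g <> LZero -> g = h) /\
     (forall g h : node C, pos g = p -> pos h = p ->
        lbl g = LOne -> h <> g -> lbl h = LZero)) /\
  (forall p l r, subtree T p = Some (VNode l r) ->
     forall g h : node C, pos g = p -> pos h = p -> g <> h ->
       [disjoint inp g & inp h]).

Definition tnodes (C : ntdd) (p : seq bool) : {set node C} :=
  [set g | pos g == p].

End Defs.

(* Main.v *)
Require Import Defs.
From mathcomp Require Import all_boot.
Set Implicit Arguments.
Unset Strict Implicit.
Unset Printing Implicit Defensive.

Lemma subtree_nil (X : finType) (t : vtree X) : subtree t [::] = Some t.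
Proof. by case: t. Qed.

Lemma subtree_cat (X : finType) (T0 : vtree X) q r :
  subtree T0 (q ++ r) = obind (fun s => subtree s r) (subtree T0 q).
Proof. by elim: q T0 => [|b q IH] [x|l rr] //=; rewrite subtree_nil. Qed.

Lemma subtree_rcons (X : finType) (T0 : vtree X) q l rr b :
  subtree T0 q = Some (VNode l rr) -> subtree T0 (rcons q b) = Some (if b then rr else l).
Proof. move=> H; rewrite -cats1 subtree_cat H. by case: b; rewrite /= subtree_nil. Qed.

Lemma leaves_sub (X : finType) (s t : vtree X) r :
  subtree s r = Some t -> {subset leaves t <= leaves s}.
Proof.
elim: r s => [|b r IH] s /=; first by rewrite subtree_nil; case=> ->.
case: s => [x|l rr] // Hs y Hy; rewrite /= mem_cat.
by case: b Hs => /IH /(_ y Hy) ->; rewrite ?orbT.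
Qed.

Lemma uniq_sub (X : finType) (s t : vtree X) r :
  subtree s r = Some t -> uniq (leaves s) -> uniq (leaves t).
Proof.
elim: r s => [|b r IH] s /=; first by rewrite subtree_nil; case=> ->.
case: s => [x|l rr] // Hs; rewrite /= cat_uniq => /and3P [ul _ ur].
by case: b Hs => /IH; auto.
Qed.

Section S.
Variable X : finType.
Variable C : ntdd.
Variable T : vtree X.
Hypothesis resp : respects T C.

Lemma eval_local (s : vtree X) (g : node C) (a b : assign X) :
  {in leaves s, a =1 b} -> evalAt s g a = evalAt s g b.
Proof.
elim: s g => [x|l IHl rr IHr] g H /=.
  by rewrite H // inE.
apply: eq_existsb => gg; rewrite IHl ?IHr // => y Hy; apply: H;
  by rewrite mem_cat Hy ?orbT.
Qed.

Hypothesis tdd : is_tdd T C.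

Lemma uniq_true t p (a : assign X) (g h : node C) : subtree T p = Some t -> pos g = p -> pos h = p ->
  evalAt t g a -> evalAt t h a -> g = h.
Proof.
elim: t p g h => [x|l IHl rr IHr] p g h Hp Hg Hh /=.
  case: tdd => /(_ p x Hp) [H1 H2] _.
  case Lg: (lbl g); case Lh: (lbl h); move=> // Eg Eh.
  all: try by [apply: H1; rewrite ?Lg ?Lh].
  all: try by rewrite Eg in Eh.
  all: try by case: (eqVneq h g) => [->//|/eqP ne]; have := H2 g h Hg Hh Lg ne; rewrite Lh.
  all: try by case: (eqVneq g h) => [->//|/eqP ne]; have := H2 h g Hh Hg Lh ne; rewrite Lg.
  all: try by rewrite Eh in Eg.
move=> /existsP [gg /andP [ig /andP [e1 e2]]] /existsP [hh /andP [ih /andP [f1 f2]]].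
case: resp => _ Hin _.
have Hpg : subtree T (pos g) = Some (VNode l rr) by rewrite Hg.
have Hph : subtree T (pos h) = Some (VNode l rr) by rewrite Hh.
have [g1 g2] := Hin g l rr Hpg gg ig.
have [h1 h2] := Hin h l rr Hph hh ih.
rewrite Hg in g1 g2; rewrite Hh in h1 h2.
have sl := subtree_rcons false Hp; have sr := subtree_rcons true Hp.
have E1 : gg.1 = hh.1 := IHl _ _ _ sl g1 h1 e1 f1.
have E2 : gg.2 = hh.2 := IHr _ _ _ sr g2 h2 e2 f2.
have Egg : gg = hh by rewrite [gg]surjective_pairing [hh]surjective_pairing E1 E2.
case: (eqVneq g h) => // /eqP ne.
have := tdd.2 p l rr Hp g h Hg Hh ne.
by move/pred0P/(_ gg); rewrite /= ig Egg ih.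
Qed.


Lemma eval_exists (t : vtree X) (a : assign X) r : forall q s (g : node C),
  subtree T q = Some s -> pos g = q -> subtree s r = Some t -> evalAt s g a ->
  exists h : node C, pos h = q ++ r /\ evalAt t h a.
Proof.
elim: r => [|c r IH] q s g Hq Hg Hs.
  rewrite subtree_nil in Hs; case: Hs => <- E; exists g; by rewrite cats0.
case: s Hq Hs => [x|l rr] Hq //= Hs /existsP [gg /andP [ig /andP [e1 e2]]].
case: resp => _ Hin _.
have Hpg : subtree T (pos g) = Some (VNode l rr) by rewrite Hg.
have [g1 g2] := Hin g l rr Hpg gg ig; rewrite Hg in g1 g2.
case: c Hs => Hs.
  have [h [ph eh]] := IH (rcons q true) rr gg.2 (subtree_rcons true Hq) g2 Hs e2.
  by exists h; rewrite -cat_rcons.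
have [h [ph eh]] := IH (rcons q false) l gg.1 (subtree_rcons false Hq) g1 Hs e1.
by exists h; rewrite -cat_rcons.
Qed.

Lemma eval_agree (t : vtree X) (a b : assign X) r : forall q s (g : node C),
  subtree T q = Some s -> pos g = q -> subtree s r = Some t -> uniq (leaves s) ->
  (forall h : node C, pos h = q ++ r -> evalAt t h a = evalAt t h b) ->
  (forall x, x \notin leaves t -> a x = b x) -> evalAt s g a = evalAt s g b.
Proof.
elim: r => [|c r IH] q s g Hq Hg Hs Hu Hh Hout.
  rewrite subtree_nil in Hs; case: Hs => ->; apply: Hh; by rewrite cats0.
case: s Hq Hs Hu => [x|l rr] Hq //= Hs Hu.
case: resp => _ Hin _.
apply: eq_existsb => gg; case ig: (gg \in inp g) => //=.
have Hpg : subtree T (pos g) = Some (VNode l rr) by rewrite Hg.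
have [g1 g2] := Hin g l rr Hpg gg ig; rewrite Hg in g1 g2.
move: Hu; rewrite cat_uniq => /and3P [ul dis ur].
have Hd : forall y, y \in leaves l -> y \in leaves rr -> False.
  by move=> y yl yr; move/hasPn: dis => /(_ y yr); rewrite /= yl.
case: c Hs Hh => Hs Hh.
  congr andb.
    apply: eval_local => y Hy; apply: Hout; apply/negP => /(leaves_sub Hs) yr.
    exact: (Hd y Hy yr).
  apply: (IH (rcons q true) rr) => //; first exact: (subtree_rcons true Hq).
  by move=> h; rewrite cat_rcons; apply: Hh.
congr andb.
  apply: (IH (rcons q false) l) => //; first exact: (subtree_rcons false Hq).
  by move=> h; rewrite cat_rcons; apply: Hh.
apply: eval_local => y Hy; apply: Hout; apply/negP => /(leaves_sub Hs) yl.
exact: (Hd y yl Hy).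
Qed.

End S.

Theorem theorem7 (X : finType) (f : assign X -> bool) (T : vtree X)
    (C : ntdd) :
  vtree_over T -> respects T C -> is_tdd T C -> computes T C f ->
  forall (p : seq bool) (t : vtree X), subtree T p = Some t ->
    num_nontriv_subfun f (vars t) <= #|tnodes C p|.
Proof.
move=> [uT _] Hr Ht Hc p t Hp.
set Y := vars t.
have HY : forall x, (x \in Y) = (x \in leaves t) by move=> x; rewrite inE.
pose G (h : node C) := if [pick tau | evalAt t h tau] is Some tau then subfun f Y tau
   else [ffun _ => false].
rewrite /num_nontriv_subfun.
apply: leq_trans (leq_imset_card G (tnodes C p)).
apply: subset_leq_card; apply/subsetP => _ /imsetP [tau Htau ->].
rewrite inE in Htau; move/existsP: Htau => [sigma]; rewrite ffunE -Hc => fs.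
have Hout : pos (out C) = [::] by case: Hr.
have [h [ph eh]] := eval_exists Hr (subtree_nil T) Hout Hp fs.
rewrite cat0s in ph.
apply/imsetP; exists h; first by rewrite inE; apply/eqP.
rewrite /G; case: pickP => [tau' e' | /(_ (Defs.merge Y tau sigma))]; last by rewrite eh.
apply/ffunP => s'; rewrite !ffunE -!Hc.
have k1 : evalAt t h (Defs.merge Y tau s').
  rewrite (@eval_local _ _ _ h _ (Defs.merge Y tau sigma)); first exact: eh.
  by move=> y Hy; rewrite !ffunE HY Hy.
have k2 : evalAt t h (Defs.merge Y tau' s').
  rewrite (@eval_local _ _ _ h _ tau'); first exact: e'.
  by move=> y Hy; rewrite !ffunE HY Hy.
apply: (eval_agree Hr (r := p) (subtree_nil T) Hout Hp uT).
  move=> h' ph'; rewrite cat0s in ph'; apply/idP/idP => e.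
    by rewrite (uniq_true Hr Ht Hp ph' ph e k1).
  by rewrite (uniq_true Hr Ht Hp ph' ph e k2).
by move=> x Hx; rewrite !ffunE HY (negbTE Hx).
Qed.
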